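(* There exists a constant $c>0$ such that for all even $n>2$ and all odd $d>1$, the set $\mathrm{Zer}_1(d,n)=\{A\in\Omega_1(d,n):\operatorname{Per}(A)=0\}$ has dimension at least $cn^{3/2}$; that is, there is a set $V$ of vertices of $\Omega_1(d,n)$ whose convex hull is contained in $\mathrm{Zer}_1(d,n)$ and has affine dimension at least $cn^{3/2}$.
   Context: Let $I_n=\{1,\dots,n\}$. A $d$-dimensional matrix of order $n$ is a function $I_n^d\to\mathbb R$. A line is the set of positions obtained by varying one coordinate and fixing the others. A diagonal is a selection of $n$ positions any two of which differ in every coordinate; $\operatorname{Per}(A)$ is the sum over diagonals of the product of the entries on the diagonal. $\Omega_1(d,n)$ is the convex polytope of non-negative $d$-dimensional matrices of order $n$ whose entries in each line sum to $1$. The dimension of $\mathrm{Zer}_1(d,n)$ is the maximum dimension of a polytope $\mathrm{Hull}(V)$, $V$ a set of vertices of $\Omega_1(d,n)$, with $\mathrm{Hull}(V)\subseteq\mathrm{Zer}_1(d,n)$. *)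

(* Defs.v *)
From HB Require Import structures.
From mathcomp Require Import all_boot all_order all_algebra.
From mathcomp Require Import reals.
Set Implicit Arguments. Unset Strict Implicit. Unset Printing Implicit Defensive.
Import Order.TTheory GRing.Theory Num.Theory.
Local Open Scope ring_scope.

(* Positions of a d-dimensional matrix of order n: elements of I_n^d,
   encoded as functions 'I_d -> 'I_n (coordinates 0..n-1). *)
Definition pos (d n : nat) := {ffun 'I_d -> 'I_n}.

Definition dmat (R : realType) (d n : nat) := {ffun pos d n -> R}.

Definition upd (d n : nat) (p : pos d n) (k : 'I_d) (i : 'I_n) : pos d n :=
  [ffun j => if j == k then i else p j].

(* A is in Omega_1(d,n): non-negative, every line sums to 1.
   The line through p in direction k is {upd p k i | i < n}. *)
Definition in_Omega1 (R : realType) (d n : nat) (A : dmat R d n) : Prop :=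
  (forall p, 0 <= A p) /\
  (forall (k : 'I_d) (p : pos d n), \sum_(i < n) A (upd p k i) = 1).

Definition is_diagonal (d n : nat) (D : {set pos d n}) : bool :=
  (#|D| == n) &&
  [forall p in D, forall q in D, (p != q) ==> [forall k, p k != q k]].

Definition Per (R : realType) (d n : nat) (A : dmat R d n) : R :=
  \sum_(D : {set pos d n} | is_diagonal D) \prod_(p in D) A p.

Definition in_Zer1 (R : realType) (d n : nat) (A : dmat R d n) : Prop :=
  in_Omega1 A /\ Per A = 0.

Definition is_vertex (R : realType) (d n : nat) (A : dmat R d n) : Prop :=
  in_Omega1 A /\
  forall (B C : dmat R d n) (t : R),
    in_Omega1 B -> in_Omega1 C -> 0 < t < 1 ->
    (forall p, A p = t * B p + (1 - t) * C p) -> B = A /\ C = A.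

Definition in_hull (R : realType) (d n : nat) (V : seq (dmat R d n))
    (A : dmat R d n) : Prop :=
  exists lam : 'I_(size V) -> R,
    (forall i, 0 <= lam i) /\ \sum_i lam i = 1 /\
    forall p, A p = \sum_i lam i * (nth 0 V i) p.

(* Affine dimension of Hull(V) (= dimension of the affine hull of V) for
   nonempty V: rank of the family of differences V_i - V_0, each matrix
   viewed as a row vector indexed by the positions. *)
Definition aff_dim (R : realType) (d n : nat) (V : seq (dmat R d n)) : nat :=
  \rank (\matrix_(i < size V, j < #|pos d n|)
           ((nth 0 V i) (enum_val j) - (nth 0 V 0) (enum_val j))).

(* Main.v *)
Require Import Defs.
From HB Require Import structures.
From mathcomp Require Import all_boot all_order all_algebra.
From mathcomp Require Import reals.
From mathcomp Require Import zify ring lra.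
Set Implicit Arguments. Unset Strict Implicit. Unset Printing Implicit Defensive.
Import Order.TTheory GRing.Theory Num.Theory.

Definition tau (a b v : nat) : nat := if v == a then b else if v == b then a else v.

Definition rowinj n (F : nat -> nat -> nat) := forall y z1 z2, y < n -> z1 < n -> z2 < n ->
  F y z1 = F y z2 -> z1 = z2.
Definition colinj n (F : nat -> nat -> nat) := forall z y1 y2, z < n -> y1 < n -> y2 < n ->
  F y1 z = F y2 z -> y1 = y2.
Definition band n L (F : nat -> nat -> nat) := forall y z,
  ((y + z) %% n < L -> F y z < L) /\ (L <= (y + z) %% n -> F y z = (y + z) %% n).
Definition latin n L F := [/\ rowinj n F, colinj n F & band n L F].

Definition g0 m (y a : nat) : nat :=
  if (a < 2 * m+2) && odd y && ~~ odd a then (if a == 0 then 2 * m else a - 2) else a.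
Definition F0 n m (y z : nat) : nat := g0 m y ((y + z) %% n).

Lemma modD_inj n x z1 z2 : z1 < n -> z2 < n -> (x + z1) %% n = (x + z2) %% n -> z1 = z2.
Proof. move=> h1 h2 /eqP; rewrite eqn_modDl !modn_small //; by move/eqP. Qed.
Lemma modD_inj' n x z1 z2 : z1 < n -> z2 < n -> (z1 + x) %% n = (z2 + x) %% n -> z1 = z2.
Proof. move=> h1 h2 /eqP; rewrite eqn_modDr !modn_small //; by move/eqP. Qed.

Lemma odd_modn n x : ~~ odd n -> odd (x %% n) = odd x.
Proof. move=> h; apply: odd_mod; exact: negbTE. Qed.

Lemma g0_inj m y a1 a2 : g0 m y a1 = g0 m y a2 -> a1 = a2.
Proof. rewrite /g0; repeat case: ifP; move=> *; lia. Qed.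

Lemma par_mod n x z : ~~ odd n -> ~~ odd ((x + z) %% n + x + z).
Proof. move=> hn; rewrite -addnA oddD odd_modn //; by case: (odd (x+z)). Qed.

Lemma F0_row n m : rowinj n (F0 n m).
Proof. move=> y z1 z2 h h1 h2; rewrite /F0 => /g0_inj; exact: modD_inj. Qed.

Lemma F0_col n m : ~~ odd n -> colinj n (F0 n m).
Proof.
move=> hn z y1 y2 hz h1 h2; rewrite /F0 => e; apply: (modD_inj' (x:=z) h1 h2).
move: e (par_mod y1 z hn) (par_mod y2 z hn).
move: ((y1 + z) %% n) ((y2 + z) %% n) => a1 a2.
rewrite /g0; repeat case: ifP; move=> *; lia.
Qed.

Lemma g0_band m y a : (a < 2 * m + 2 -> g0 m y a < 2 * m + 2) /\ (2 * m + 2 <= a -> g0 m y a = a).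
Proof. rewrite /g0; split; repeat case: ifP; move=> *; lia. Qed.

Lemma F0_latin n m : ~~ odd n -> latin n (2 * m + 2) (F0 n m).
Proof.
move=> hn; split; [exact: F0_row | exact: F0_col |].
move=> y z; exact: g0_band.
Qed.

Lemma tau_inj a b v w : tau a b v = tau a b w -> v = w.
Proof. rewrite /tau; repeat case: ifP => /eqP; lia. Qed.

Lemma tau_latin n L a b F : a < L -> b < L -> latin n L F -> latin n L (fun y z => tau a b (F y z)).
Proof.
move=> ha hb [hr hc hb']; split.
- move=> y z1 z2 h h1 h2 /tau_inj; exact: hr.
- move=> z y1 y2 h h1 h2 /tau_inj; exact: hc.
- move=> y z; have [e1 e2] := hb' y z; split.
  + move=> /e1; rewrite /tau; repeat case: ifP => /eqP; lia.
  + move=> h; rewrite /tau (e2 h); repeat case: ifP => /eqP; lia.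
Qed.

Definition swapF (F : nat -> nat -> nat) r1 r2 c1 c2 a b y z :=
  if ((y == r1) || (y == r2)) && ((z == c1) || (z == c2)) then tau a b (F y z) else F y z.

Lemma swap_latin n L F r1 r2 c1 c2 a b : latin n L F ->
  r1 < n -> r2 < n -> c1 < n -> c2 < n -> r1 != r2 -> c1 != c2 -> a < L -> b < L ->
  F r1 c1 = a -> F r2 c2 = a -> F r1 c2 = b -> F r2 c1 = b ->
  latin n L (swapF F r1 r2 c1 c2 a b).
Proof.
move=> [hr hc hb] hr1 hr2 hc1 hc2 nr nc ha hb0 e11 e22 e12 e21.
have rowE y z : (y == r1) || (y == r2) -> z < n -> swapF F r1 r2 c1 c2 a b y z = tau a b (F y z).
  move=> hy hz; rewrite /swapF hy /=; case: ifP => // hzc.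
  rewrite /tau; case: ifP => [/eqP E|_]; first exfalso.
    case/orP: hy => /eqP ey; subst y.
    - have := hr r1 z c1 hr1 hz hc1; rewrite E e11 => /(_ erefl) ez; by rewrite ez eqxx in hzc.
    - have := hr r2 z c2 hr2 hz hc2; rewrite E e22 => /(_ erefl) ez; by rewrite ez eqxx orbT in hzc.
  case: ifP => [/eqP E|//]; exfalso.
  case/orP: hy => /eqP ey; subst y.
  - have := hr r1 z c2 hr1 hz hc2; rewrite E e12 => /(_ erefl) ez; by rewrite ez eqxx orbT in hzc.
  - have := hr r2 z c1 hr2 hz hc1; rewrite E e21 => /(_ erefl) ez; by rewrite ez eqxx in hzc.
have colE y z : (z == c1) || (z == c2) -> y < n -> swapF F r1 r2 c1 c2 a b y z = tau a b (F y z).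
  move=> hz hy; rewrite /swapF hz andbT; case: ifP => // hyc.
  rewrite /tau; case: ifP => [/eqP E|_]; first exfalso.
    case/orP: hz => /eqP ez; subst z.
    - have := hc c1 y r1 hc1 hy hr1; rewrite E e11 => /(_ erefl) ey; by rewrite ey eqxx in hyc.
    - have := hc c2 y r2 hc2 hy hr2; rewrite E e22 => /(_ erefl) ey; by rewrite ey eqxx orbT in hyc.
  case: ifP => [/eqP E|//]; exfalso.
  case/orP: hz => /eqP ez; subst z.
  - have := hc c1 y r2 hc1 hy hr2; rewrite E e21 => /(_ erefl) ey; by rewrite ey eqxx orbT in hyc.
  - have := hc c2 y r1 hc2 hy hr1; rewrite E e12 => /(_ erefl) ey; by rewrite ey eqxx in hyc.
split.
- move=> y z1 z2 hy h1 h2; case hyr: ((y == r1) || (y == r2)).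
  + rewrite !rowE // => /tau_inj; exact: hr.
  + rewrite /swapF hyr /=; exact: hr.
- move=> z y1 y2 hz h1 h2; case hzc: ((z == c1) || (z == c2)).
  + rewrite !colE // => /tau_inj; exact: hc.
  + rewrite /swapF hzc !andbF; exact: hc.
- move=> y z; have [e1 e2] := hb y z; rewrite /swapF; case: ifP => _; last by [].
  split.
  + move=> /e1; rewrite /tau; repeat case: ifP => /eqP; lia.
  + move=> h; rewrite /tau (e2 h); repeat case: ifP => /eqP; lia.
Qed.

Lemma modshift n x k y : x <= n -> (x + k + (y + (n - x)) %% n) %% n = (k + y) %% n.
Proof.
move=> hx; rewrite modnDmr.
have -> : x + k + (y + (n - x)) = (k + y) + n by lia.
by rewrite modnDr.
Qed.

Definition cc1 n I D := (2 * D + (n - 2 * I)) %% n.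
Definition cc2 n I D := (2 * D + 1 + (n - 2 * I)) %% n.
Definition Fblk n m I D := swapF (F0 n m) (2 * I) (2 * I + 1) (cc1 n I D) (cc2 n I D) (2 * D) (2 * D + 1).

Lemma F0_c1 n m I D : 2 * I < n -> 2 * D < n -> F0 n m (2 * I) (cc1 n I D) = 2 * D.
Proof.
move=> hI hD; have e := @modshift n (2 * I) 0 (2 * D) (ltnW hI).
rewrite addn0 add0n in e; rewrite /F0 /cc1 e.
rewrite modn_small //; rewrite /g0; case: ifP => //; lia.
Qed.
Lemma F0_c2 n m I D : 2 * I < n -> 2 * D + 1 < n -> F0 n m (2 * I) (cc2 n I D) = 2 * D + 1.
Proof.
move=> hI hD; have e := @modshift n (2 * I) 0 (2 * D + 1) (ltnW hI).
rewrite addn0 add0n in e; rewrite /F0 /cc2 e.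
rewrite modn_small //; rewrite /g0; case: ifP => //; lia.
Qed.
Lemma F0_c1' n m I D : 2 * I < n -> 2 * D + 1 < n -> F0 n m (2 * I + 1) (cc1 n I D) = 2 * D + 1.
Proof.
move=> hI hD; rewrite /F0 /cc1 modshift; last lia.
have -> : 1 + 2 * D = 2 * D + 1 by lia.
rewrite modn_small //; rewrite /g0; case: ifP => //; lia.
Qed.
Lemma F0_c2' n m I D : 2 * I < n -> D < m -> 2 * D + 2 < n -> F0 n m (2 * I + 1) (cc2 n I D) = 2 * D.
Proof.
move=> hI hm hD; rewrite /F0 /cc2 modshift; last lia.
have -> : 1 + (2 * D + 1) = 2 * D + 2 by lia.
rewrite modn_small //; rewrite /g0; case: ifP; repeat case: ifP; lia.
Qed.

Lemma Fblk_latin n m I D : ~~ odd n -> 2 * I + 1 < n -> D < m -> 2 * m + 2 <= n ->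
  latin n (2 * m + 2) (Fblk n m I D).
Proof.
move=> hn hI hD hL; have n0 : 0 < n by lia.
apply: swap_latin; try lia.
- exact: F0_latin.
- exact: ltn_pmod.
- exact: ltn_pmod.
- rewrite /cc1 /cc2; apply/negP => /eqP /eqP; rewrite eqn_modDr !modn_small; lia.
- apply: F0_c1; lia.
- apply: F0_c2'; lia.
- apply: F0_c2; lia.
- apply: F0_c1'; lia.
Qed.

Definition Fl n m j : nat -> nat -> nat :=
  match j with
  | 0 => F0 n m
  | 1 => fun y z => tau (2 * m) (2 * m + 1) (F0 n m y z)
  | b.+2 => Fblk n m (b %/ m) (b %% m)
  end.

Lemma Fl_latin n m j : ~~ odd n -> 2 * m + 2 <= n -> j < (n %/ 2) * m + 2 ->
  latin n (2 * m + 2) (Fl n m j).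
Proof.
move=> hn hL hj; case: j hj => [|[|b]] hb /=.
- exact: F0_latin.
- apply: tau_latin; try lia; exact: F0_latin.
- have m0 : 0 < m by case: m hb hL => [|m] //; rewrite muln0.
  have hI : b %/ m < n %/ 2 by rewrite ltn_divLR //; lia.
  apply: Fblk_latin => //; try lia.
Qed.

Lemma tau_ne a b v : v != a -> v != b -> tau a b v = v.
Proof. by rewrite /tau => /negbTE -> /negbTE ->. Qed.

Lemma F0_s n m : 2 * m + 2 <= n -> F0 n m 0 (2 * m + 1) = 2 * m + 1.
Proof. move=> h; rewrite /F0 add0n modn_small; last lia. rewrite /g0 /=; case: ifP => //; lia. Qed.

Lemma Fl_qs n m j : ~~ odd n -> 2 * m + 2 <= n -> j < (n %/ 2) * m + 2 ->
  (2 * m == Fl n m j 0 (2 * m + 1)) = (j == 1).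
Proof.
move=> hn hL; case: j => [|[|b]] hb /=.
- rewrite F0_s //; lia.
- rewrite F0_s // /tau; repeat case: ifP => /eqP; lia.
- rewrite /Fblk /swapF F0_s //; case: ifP => _; last lia.
  have m0 : 0 < m by case: m hb hL => [|m] //; rewrite muln0.
  have hD : b %% m < m by exact: ltn_pmod.
  rewrite /tau; repeat case: ifP => /eqP; lia.
Qed.

Lemma Fl_qb n m j b : ~~ odd n -> 2 * m + 2 <= n -> b < (n %/ 2) * m ->
  (2 * (b %% m) + 1 == Fl n m j (2 * (b %/ m)) (cc1 n (b %/ m) (b %% m))) = (j == b.+2).
Proof.
move=> hn hL hb.
have m0 : 0 < m by case: m hb hL => [|m] //; rewrite muln0.
have hD : b %% m < m by exact: ltn_pmod.
have hI : b %/ m < n %/ 2 by rewrite ltn_divLR //; lia.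
have e0 : F0 n m (2 * (b %/ m)) (cc1 n (b %/ m) (b %% m)) = 2 * (b %% m) by apply: F0_c1; lia.
case: j => [|[|b']] /=.
- rewrite e0; lia.
- rewrite e0 /tau; repeat case: ifP => /eqP; lia.
- rewrite /Fblk /swapF e0.
  have hD' : b' %% m < m by exact: ltn_pmod.
  apply/eqP/eqP => [|[e]]; last first.
    by subst b'; rewrite !eqxx /= /tau eqxx.
  case: ifP => hc; last lia.
  rewrite /tau; case: ifP => /eqP h1; last by case: ifP => /eqP; lia.
  move=> _; move/orP: (proj1 (andP hc)) => hI'.
  have eI : b %/ m = b' %/ m by case/orP: hI' => /eqP; lia.
  have eD : b %% m = b' %% m by lia.
  by rewrite (divn_eq b m) (divn_eq b' m) eI eD.
Qed.

Local Open Scope ring_scope.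

Section B.
Variable R : realType.

Lemma sum_inj1 n (G : nat -> nat) x :
  (forall i j, (i < n)%N -> (j < n)%N -> G i = G j -> i = j) ->
  (forall i, (i < n)%N -> (G i < n)%N) -> (x < n)%N ->
  \sum_(i < n) (if x == G i then 1 else 0 : R) = 1.
Proof.
move=> hinj hlt hx.
pose h (i : 'I_n) : 'I_n := Ordinal (hlt _ (ltn_ord i)).
have hi : injective h by move=> i j /(congr1 val) /= /hinj; move=> /(_ (ltn_ord i) (ltn_ord j)) e; apply/val_inj.
have [hinv hK hK'] := injF_bij hi.
pose x' : 'I_n := Ordinal hx.
rewrite (bigD1 (hinv x')) //= big1.
  have : G (hinv x') = x by have := hK' x'; move/(congr1 val).
  by move=> ->; rewrite eqxx addr0.
move=> i hne; case: eqP => // e; exfalso; move/eqP: hne; apply.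
apply: hi; rewrite hK'; apply/val_inj => /=; by rewrite e.
Qed.


Variables (d' n : nat).
Notation d := d'.+3.
Definition k0 : 'I_d := ord0.
Definition k1 : 'I_d := Ordinal (isT : (1 < d)%N).
Definition Tp (p : pos d n) : nat := (\sum_(k < d | (2 <= k)%N) (p k : nat))%N.
Definition Mat (F : nat -> nat -> nat) : dmat R d n :=
  [ffun p : pos d n => if (p k0 : nat) == F (p k1) (Tp p %% n)%N then 1 else 0].

Lemma upd_ne (p : pos d n) k i k' : k' != k -> upd p k i k' = p k'.
Proof. by move=> h; rewrite /upd ffunE (negbTE h). Qed.
Lemma upd_eq (p : pos d n) k i : upd p k i k = i.
Proof. by rewrite /upd ffunE eqxx. Qed.

Lemma Tp_upd_lt (p : pos d n) (k : 'I_d) i : (k < 2)%N -> Tp (upd p k i) = Tp p.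
Proof.
move=> hk; apply: eq_bigr => k' hk'; rewrite upd_ne //; apply/eqP => e; subst; lia.
Qed.

Lemma Tp_upd_ge (p : pos d n) (k : 'I_d) i : (2 <= k)%N ->
  Tp (upd p k i) = (\sum_(k' < d | (2 <= k')%N && (k' != k)) (p k' : nat) + i)%N.
Proof.
move=> hk; rewrite /Tp (bigD1 k) //= upd_eq addnC; congr (_ + _)%N.
by apply: eq_bigr => k' /andP [_ h]; rewrite upd_ne.
Qed.

Lemma Mat_omega L F : latin n L F -> (L <= n)%N -> (0 < n)%N -> in_Omega1 (Mat F).
Proof.
move=> [hr hc hb] hL n0; split.
  by move=> p; rewrite ffunE; case: ifP.
move=> k p.
have Flt y z : (F y z < n)%N.
  have [e1 e2] := hb y z; case: (ltnP ((y + z) %% n)%N L) => h.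
    by have := e1 h; lia.
  rewrite (e2 h); apply: ltn_pmod; lia.
case: (ltnP k 2) => hk.
- have [ek|ek] : k = k0 \/ k = k1.
    by case: k hk => [[|[|k]] hk] hk' //=; [left|right]; apply/val_inj.
  + subst k.
    under eq_bigr => i _ do rewrite ffunE upd_eq (upd_ne _ _ (isT : k1 != k0)) Tp_upd_lt //.
    rewrite (eq_bigr (fun i : 'I_n => if (F (p k1) (Tp p %% n)%N) == i then 1 else 0)); last first.
      by move=> i _; rewrite eq_sym.
    have := @sum_inj1 n (fun i => i) (F (p k1) (Tp p %% n)%N) (fun i j _ _ e => e) (fun i h => h) (Flt _ _).
    done.
  + subst k.
    under eq_bigr => i _ do rewrite ffunE upd_eq (upd_ne _ _ (isT : k0 != k1)) Tp_upd_lt //.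
    apply: (@sum_inj1 n (fun y => F y (Tp p %% n)%N)) => //.
    * move=> i j hi hj; apply: hc => //; apply: ltn_pmod; lia.
- have h0 : k0 != k by apply/eqP => e; rewrite -e in hk.
  have h1 : k1 != k by apply/eqP => e; rewrite -e in hk.
  under eq_bigr => i _ do rewrite ffunE (upd_ne _ _ h0) (upd_ne _ _ h1) Tp_upd_ge //.
  set S' := (\sum_(k' < d | _) _)%N.
  apply: (@sum_inj1 n (fun i => F (p k1) ((S' + i) %% n)%N)) => //.
  + move=> i j hi hj /hr h; apply: (modD_inj hi hj); apply: h => //; apply: ltn_pmod; lia.
Qed.

Lemma upd_id (p : pos d n) k : upd p k (p k) = p.
Proof. by apply/ffunP => j; rewrite /upd ffunE; case: eqP => // ->. Qed.

Lemma omega_le1 (X : dmat R d n) p : in_Omega1 X -> X p <= 1.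
Proof.
move=> [h0 h1]; rewrite -(h1 k0 p) (bigD1 (p k0)) //= upd_id lerDl.
by apply: sumr_ge0 => i _; apply: h0.
Qed.

Lemma vertex01 (A : dmat R d n) : in_Omega1 A -> (forall p, A p = 0 \/ A p = 1) -> is_vertex A.
Proof.
move=> hA h01; split => // B C t hB hC /andP [t0 t1] e.
have key p : B p = A p /\ C p = A p.
  have b0 := hB.1 p; have c0 := hC.1 p.
  have b1 := omega_le1 p hB; have c1 := omega_le1 p hC.
  have ep := e p.
  case: (h01 p) => hp; rewrite hp in ep *; split; nra.
by split; apply/ffunP => p; have [] := key p.
Qed.

Lemma hull_omega (V : seq (dmat R d n)) A : (forall X, X \in V -> in_Omega1 X) -> in_hull V A -> in_Omega1 A.
Proof.
move=> hV [lam [l0 [l1 e]]]; split.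
  move=> p; rewrite e; apply: sumr_ge0 => i _; apply: mulr_ge0 => //.
  by apply: (hV _ (mem_nth 0 (ltn_ord i))).1.
move=> k p.
under eq_bigr => j _ do rewrite e.
rewrite exchange_big /= -l1; apply: eq_bigr => i _.
by rewrite -mulr_sumr (hV _ (mem_nth 0 (ltn_ord i))).2 mulr1.
Qed.

Lemma hull_per (V : seq (dmat R d n)) A :
  (forall D : {set pos d n}, is_diagonal D -> exists2 p, p \in D & forall i : 'I_(size V), nth 0 V i p = 0) ->
  in_hull V A -> Per A = 0.
Proof.
move=> hD [lam [l0 [l1 e]]]; rewrite /Per big1 // => D /hD [p hp hz].
rewrite (bigD1 p) //= e big1 ?mul0r // => i _; by rewrite hz mulr0.
Qed.

Lemma rank_lb (V : seq (dmat R d n)) K (q : 'I_K -> pos d n) :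
  size V = K.+1 ->
  (forall (i j : 'I_K), nth 0 V i.+1 (q j) - nth 0 V 0 (q j) = (i == j)%:R) ->
  (K <= aff_dim V)%N.
Proof.
move=> hs hq; rewrite /aff_dim.
set M := \matrix_(i < size V, j < #|pos d n|) _.
pose P : 'M[R]_(#|pos d n|, K) := \matrix_(j, b) (enum_val j == q b)%:R.
pose Q : 'M[R]_(K, size V) := \matrix_(b, i) ((i : nat) == b.+1)%:R.
have e : Q *m M *m P = 1%:M.
  apply/matrixP => b b'; rewrite !mxE.
  have hb : (b.+1 < size V)%N by rewrite hs ltnS.
  pose i0 : 'I_(size V) := Ordinal hb.
  rewrite (bigD1 (enum_rank (q b'))) //= big1; last first.
    move=> j hj; rewrite !mxE; case: eqP; last by rewrite mulr0.
    by move=> ej; move: hj; rewrite -ej enum_valK eqxx.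
  rewrite !mxE enum_rankK eqxx mulr1 addr0.
  rewrite (bigD1 i0) //= big1; last first.
    move=> i hi; rewrite !mxE; case: eqP; last by rewrite mul0r.
    by move=> ei; exfalso; move/eqP: hi; apply; apply/val_inj.
  rewrite !mxE eqxx mul1r addr0 enum_rankK hq.
  by case: eqP.
have := mxrankM_maxl (Q *m M) P; rewrite e mxrank1 => h.
exact: (leq_trans h (mxrankM_maxr _ _)).
Qed.

Lemma diag_sum (D : {set pos d n}) k (G : 'I_n -> nat) : is_diagonal D ->
  (\sum_(p in D) G (p k) = \sum_(i < n) G i)%N.
Proof.
case/andP => /eqP hc /forallP hall.
have inj : {in D &, injective (fun p : pos d n => p k)}.
  move=> p q hp hq e; apply/eqP; apply/negPn/negP => hne.
  have := hall p; rewrite hp /= => /forallP /(_ q); rewrite hq hne /= => /forallP /(_ k).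
  by rewrite e eqxx.
have img : [set (p : pos d n) k | p in D] = [set: 'I_n].
  apply/eqP; rewrite eqEcard subsetT cardsT card_ord card_in_imset // hc leqnn //.
rewrite -(big_imset _ inj) img.
by apply: eq_bigl => i; rewrite inE.
Qed.
End B.

Lemma sum_id2 n : (2 * \sum_(i < n) (i : nat) = n * (n - 1))%N.
Proof.
elim: n => [|n IH]; first by rewrite big_ord0.
rewrite big_ord_recr /= mulnDr IH; nia.
Qed.

Lemma sum_lt2 n L : (2 * \sum_(i < n) (if (i < L)%N then (i : nat) else 0%N) = minn L n * (minn L n - 1))%N.
Proof.
elim: n => [|n IH]; first by rewrite big_ord0 minn0.
rewrite big_ord_recr /= mulnDr IH.
case: (boolP (n < L)%N) => h.
  have -> : minn L n = n by lia.
  have -> : minn L n.+1 = n.+1 by lia.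
  nia.
have -> : minn L n = L by lia.
have -> : minn L n.+1 = L by lia.
lia.
Qed.

Lemma sum_lt1 n L : (\sum_(i < n) (if (i < L)%N then 1 else 0) = minn L n)%N.
Proof.
elim: n => [|n IH]; first by rewrite big_ord0 minn0.
rewrite big_ord_recr /= IH.
case: (boolP (n < L)%N) => h; lia.
Qed.


Lemma arith t h S SL Q A : (0 < h)%N -> (2 * S = 2 * h * (2 * h - 1))%N ->
  ((2 * t + 1) * S + SL = 2 * h * Q + A)%N -> (A <= 2 * SL)%N -> (2 * SL < 2 * h)%N -> False.
Proof.
move=> h0 hS e hA hL.
case: h h0 hS e hL => [//|h'] _ hS e hL.
have eS : S = ((h'.+1) * (2 * h' + 1))%N.
  have e1 : (2 * h'.+1 - 1 = 2 * h' + 1)%N by lia.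
  rewrite e1 in hS; move: hS; rewrite -mulnA; move/eqP; rewrite eqn_mul2l /=; by move/eqP.
have eW : ((2 * t + 1) * S = 2 * h'.+1 * (2 * t * h' + t + h') + h'.+1)%N.
  rewrite eS; ring.
rewrite eW in e.
case: (leqP Q (2 * t * h' + t + h')) => hw.
- have : (2 * h'.+1 * Q <= 2 * h'.+1 * (2 * t * h' + t + h'))%N by rewrite leq_mul2l hw orbT.
  lia.
- have : (2 * h'.+1 * (2 * t * h' + t + h') + 2 * h'.+1 <= 2 * h'.+1 * Q)%N.
    by rewrite -mulnSr leq_mul2l hw orbT.
  lia.
Qed.

Section C.
Variables (d' n : nat).
Notation d := d'.+3.

Definition good L (p : pos d n) : bool :=
  let a := (((p (k1 d') : nat) + Tp p) %% n)%N in
  ((a < L) && (p (k0 d') < L))%N || ((p (k0 d') == a :> nat) && (L <= a)%N).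

Lemma diag_free L (D : {set pos d n}) : ~~ odd n -> ~~ odd d' -> (L * (L - 1) < n)%N -> (L <= n)%N ->
  is_diagonal D -> (forall p, p \in D -> good L p) -> False.
Proof.
move=> hn hd hLn hL hD hg.
set S := (\sum_(i < n) (i : nat))%N.
have s0 : (\sum_(p in D) (p (k0 d') : nat) = S)%N := diag_sum (k0 d') (fun i => (i : nat)) hD.
have s1 : (\sum_(p in D) (p (k1 d') : nat) = S)%N := diag_sum (k1 d') (fun i => (i : nat)) hD.
have sT : (\sum_(p in D) Tp p = (d'.+1) * S)%N.
  rewrite /Tp exchange_big /=.
  under eq_bigr => k _ do rewrite (diag_sum k (fun i => (i : nat)) hD).
  by rewrite big_mkcond !big_ord_recl /= sum_nat_const card_ord.
pose a (p : pos d n) := (((p (k1 d') : nat) + Tp p) %% n)%N.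
pose qd (p : pos d n) := (((p (k1 d') : nat) + Tp p) %/ n)%N.
pose p0 (p : pos d n) := (p (k0 d') : nat).
have sa : (\sum_(p in D) ((p (k1 d') : nat) + Tp p) = (\sum_(p in D) qd p) * n + \sum_(p in D) a p)%N.
  rewrite big_distrl /= -big_split /=; apply: eq_bigr => p _; exact: divn_eq.
have sa2 : (\sum_(p in D) a p = \sum_(p in D) (if p0 p < L then a p else 0) + \sum_(p in D) (if p0 p < L then 0 else p0 p))%N.
  rewrite -big_split /=; apply: eq_bigr => p hp; have := hg p hp; rewrite /good -/(a p) -/(p0 p).
  case: ifP => h; first by rewrite addn0.
  by rewrite add0n => /orP [/andP [_ h'] | /andP [/eqP -> _]] //; rewrite h' in h.
have sp2 : (S = \sum_(p in D) (if p0 p < L then p0 p else 0) + \sum_(p in D) (if p0 p < L then 0 else p0 p))%N.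
  by rewrite -s0 -big_split /=; apply: eq_bigr => p _; case: ifP; rewrite ?addn0.
have sL : (\sum_(p in D) (if p0 p < L then p0 p else 0) = \sum_(i < n) (if (i < L)%N then (i : nat) else 0%N))%N.
  exact: (diag_sum (k0 d') (fun i => if (i < L)%N then (i : nat) else 0%N) hD).
have sC : (\sum_(p in D) (if p0 p < L then 1 else 0) = \sum_(i < n) (if (i < L)%N then 1 else 0))%N.
  exact: (diag_sum (k0 d') (fun i => if (i < L)%N then 1 else 0)%N hD).
rewrite sum_lt1 in sC.
have hA : (\sum_(p in D) (if p0 p < L then a p else 0) <= (L - 1) * \sum_(p in D) (if p0 p < L then 1 else 0))%N.
  rewrite big_distrr /=; apply: leq_sum => p hp; have := hg p hp; rewrite /good -/(a p) -/(p0 p).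
  case: ifP => h; last by [].
  move=> /orP [/andP [h' _] | /andP [/eqP e _]]; first lia.
  by rewrite -e; lia.
have h2S := sum_id2 n.
have h2L := sum_lt2 n L.
have eL : minn L n = L by lia.
rewrite sC eL in hA; rewrite eL in h2L.
move: hA h2L h2S sa sa2 sp2 sT s1 sL.
set A := (\sum_(p in D) (if p0 p < L then a p else 0))%N.
set B := (\sum_(p in D) (if p0 p < L then 0 else p0 p))%N.
set Q := (\sum_(p in D) qd p)%N.
set SL := (\sum_(i < n) (if (i < L)%N then (i : nat) else 0%N))%N.
rewrite big_split /= => hA h2L h2S sa sa2 sp2 sT s1 sL.
rewrite s1 sT sa2 in sa.
have [t et] : exists t, d' = (2 * t)%N by exists (d' %/ 2)%N; lia.
have [h eh] : exists h, n = (2 * h)%N by exists (n %/ 2)%N; lia.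
rewrite -/S in h2S.
rewrite sL in sp2.
rewrite et in sa; rewrite eh in sa h2S hLn.
apply: (@arith t h S SL Q A); try lia.

Qed.
End C.

Section D.
Variable R : realType.
Variables (d' n' : nat).
Notation d := d'.+3.
Notation n := n'.+1.

Definition mkpos (v0 v1 v2 : nat) : pos d n :=
  [ffun k : 'I_d => inord (if (k : nat) == 0%N then v0 else if (k : nat) == 1%N then v1
                           else if (k : nat) == 2%N then v2 else 0%N)].

Lemma mkpos0 v0 v1 v2 : (v0 < n)%N -> (mkpos v0 v1 v2 (k0 d') : nat) = v0.
Proof. by move=> h; rewrite ffunE /= inordK. Qed.
Lemma mkpos1 v0 v1 v2 : (v1 < n)%N -> (mkpos v0 v1 v2 (k1 d') : nat) = v1.
Proof. by move=> h; rewrite ffunE /= inordK. Qed.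
Lemma mkposT v0 v1 v2 : (v2 < n)%N -> Tp (mkpos v0 v1 v2) = v2.
Proof.
move=> h; rewrite /Tp big_mkcond !big_ord_recl /= big1 ?addn0.
  by rewrite ffunE /= inordK.
by move=> i _; rewrite ffunE /= inordK.
Qed.

Lemma Mat_mkpos F v0 v1 v2 : (v0 < n)%N -> (v1 < n)%N -> (v2 < n)%N ->
  Mat R d' n F (mkpos v0 v1 v2) = if v0 == F v1 v2 then 1 else 0.
Proof.
move=> h0 h1 h2; rewrite ffunE mkpos0 // mkpos1 // mkposT // modn_small //.
Qed.

Lemma construct m : ~~ odd n -> ~~ odd d' -> ((2 * m + 2) * (2 * m + 1) < n)%N ->
  exists V : seq (dmat R d n), [/\ V != [::], (forall A, A \in V -> is_vertex A),
    (forall A, in_hull V A -> in_Zer1 A) & ((n %/ 2) * m + 1 <= aff_dim V)%N].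
Proof.
move=> hn hd hm.
have hL : (2 * m + 2 <= n)%N by nia.
set Kb := ((n %/ 2) * m)%N.
pose V := mkseq (fun j => Mat R d' n (Fl n m j)) (Kb + 2).
have hsz : size V = (Kb + 1).+1 by rewrite size_mkseq addn2 addn1.
have hlat j : (j < Kb + 2)%N -> latin n (2 * m + 2) (Fl n m j) := @Fl_latin n m j hn hL.
have hnth i : (i < Kb + 2)%N -> nth 0 V i = Mat R d' n (Fl n m i).
  by move=> h; rewrite nth_mkseq.
have memV A : A \in V -> exists2 j, (j < Kb + 2)%N & A = Mat R d' n (Fl n m j).
  by rewrite /V /mkseq => /mapP [j]; rewrite mem_iota add0n => hj ->; exists j.
have omega j : (j < Kb + 2)%N -> in_Omega1 (Mat R d' n (Fl n m j)).
  by move=> hj; apply: (@Mat_omega R d' _ _ _ (hlat j hj) hL (ltn0Sn _)).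
have omegaV X : X \in V -> in_Omega1 X by move=> /memV [j hj ->]; exact: omega.
exists V; split.
- by rewrite -size_eq0 hsz.
- move=> A /memV [j hj ->]; apply: vertex01; first exact: omega.
  by move=> p; rewrite ffunE; case: ifP; [right|left].
- move=> A hA; split; first exact: hull_omega hA.
  apply: hull_per hA => D hD.
  case: (boolP [exists p in D, [forall i : 'I_(size V), nth 0 V i p == 0]]).
    move/existsP => [p /andP [hp /forallP hi]]; exists p => // i; exact/eqP.
  move=> hne; exfalso.
  apply: (diag_free (L := (2 * m + 2)%N) hn hd _ hL hD); first by lia.
  move=> p hp.
  move: hne; rewrite negb_exists => /forallP /(_ p); rewrite hp /= negb_forall => /existsP [i].
  have hi : (i < Kb + 2)%N by have := ltn_ord i; rewrite {2}hsz; lia.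
  rewrite hnth // ffunE; case: ifP => [/eqP e _|]; last by rewrite eqxx.
  have [b1 b2] := (let: And3 _ _ hb := hlat i hi in hb) (p (k1 d')) (Tp p %% n)%N.
  rewrite modnDmr -e in b1 b2.
  rewrite /good /=; case: (ltnP (((p (k1 d') : nat) + Tp p) %% n)%N (2 * m + 2)) => ha.
    by rewrite (b1 ha).
  by rewrite (b2 ha) eqxx orbT.
- pose q (j : 'I_(Kb + 1)) : pos d n :=
    if (j : nat) == 0%N then mkpos (2 * m) 0 (2 * m + 1)
    else mkpos (2 * (j.-1 %% m) + 1) (2 * (j.-1 %/ m)) (cc1 n (j.-1 %/ m) (j.-1 %% m)).
  apply: (rank_lb (q := q) hsz) => i j.
  have hi : (i.+1 < Kb + 2)%N by have := ltn_ord i; lia.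
  rewrite (hnth _ hi) (hnth 0%N) ?addn2 // /q.
  case: ifP => [/eqP j0|jn0].
    rewrite !Mat_mkpos; try lia.
    rewrite !Fl_qs //; try lia.
    rewrite -(inj_eq val_inj) /= j0; by case: (i : nat) => [|i'] /=; rewrite ?subr0 ?subrr.
  have m0 : (0 < m)%N.
    have : (0 < Kb)%N by have := ltn_ord j; move/negbT: jn0; lia.
    by rewrite /Kb muln_gt0 => /andP [].
  set b := (j : nat).-1.
  have hb : (b < Kb)%N by have := ltn_ord j; rewrite /b; lia.
  have hD : (b %% m < m)%N := ltn_pmod _ m0.
  have hI : (b %/ m < n %/ 2)%N by rewrite ltn_divLR //; lia.
  have hc : (cc1 n (b %/ m) (b %% m) < n)%N by apply: ltn_pmod.
  rewrite !Mat_mkpos //; try lia.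
  rewrite !Fl_qb //.
  have ej : (j : nat) = b.+1 by rewrite /b; lia.
  rewrite -(inj_eq val_inj) /= ej; case: (i : nat) => [|i'] /=; first by rewrite subr0.
  by rewrite subr0 !eqSS; case: eqP.
Qed.
End D.

Unset Implicit Arguments.

Theorem corollary2p7 (R : realType) :
  exists c : R, 0 < c /\
    forall d n : nat, ~~ odd n -> (2 < n)%N -> odd d -> (1 < d)%N ->
      exists V : seq (dmat R d n),
        V != [::] /\
        (forall A, A \in V -> is_vertex A) /\
        (forall A : dmat R d n, in_hull V A -> in_Zer1 A) /\
        c * (n%:R * Num.sqrt n%:R) <= (aff_dim V)%:R.
Proof.
exists (1 / 4096); split; first by lra.
move=> d n hn n2 hd d1.
case: d hd d1 => [|[|[|d']]] // hd _.
case: n hn n2 => [|n'] // hn n2.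
have hd' : ~~ odd d' by move: hd; rewrite /= negbK.
pose P i := ((2 * i + 2) * (2 * i + 1) < n'.+1)%N.
have exP : exists i, P i by exists 0%N; rewrite /P; lia.
have ubP : forall i, P i -> (i <= n'.+1)%N by move=> i; rewrite /P; nia.
case: (ex_maxnP exP ubP) => m hm hmax.
have [V [h1 h2 h3 h4]] := construct R hn hd' hm.
exists V; split => //; split => //; split => //.
have hm1 : (n'.+1 <= (2 * m + 4) * (2 * m + 3))%N.
  rewrite leqNgt; apply/negP => h; have := hmax m.+1; rewrite /P.
  have -> : (2 * m.+1 + 2 = 2 * m + 4)%N by lia.
  have -> : (2 * m.+1 + 1 = 2 * m + 3)%N by lia.
  by move=> /(_ h); lia.
have eN : (n'.+1 = 2 * (n'.+1 %/ 2))%N by lia.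
apply: (le_trans _ (_ : ((n'.+1 %/ 2) * m + 1)%:R <= (aff_dim V)%:R)); last by rewrite ler_nat.
move: hm1; rewrite -(ler_nat R) => hm1.
move: eN => /(congr1 (fun x => x%:R : R)) eN.
rewrite !natrD !natrM in hm1 eN *.
set N := (n'.+1)%:R in hm1 eN *.
set h := ((n'.+1 %/ 2)%N)%:R in eN *.
set M := m%:R.
have M0 : 0 <= M by rewrite /M ler0n.
have h0 : 0 <= h by rewrite /h ler0n.
have s0 : 0 <= Num.sqrt N := sqrtr_ge0 N.
have sN : Num.sqrt N ^+ 2 = N by rewrite sqr_sqrtr // /N ler0n.
set s := Num.sqrt N in s0 sN *.
rewrite expr2 in sN.
have hs : s < 2 * M + 4 by nra.
have e2 : (2%:R : R) = 2 by [].
have e3 : (3%:R : R) = 3 by []. have e4 : (4%:R : R) = 4 by [].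
case: (lerP 16 s) => hs16.
- have : s <= 4 * M by nra.
  nra.
- nra.
Qed.
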